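(* Let $P$ be a closed process of the Value-Passing Quality Calculus in which variables and names are bound exactly once and all quality guards are $\forall$ or $\exists$. For all labels $l$ occurring in $P$, the formula $[\![l]\!]$ contains no literal $\bar{x}$ of an input variable; in particular, $[\![l]\!]$ only contains literals $\bar{c}$ related to channels $c$.
   Context: Syntax: $P ::= \mathsf{0} \mid (\nu c)P \mid P_1 \mid P_2 \mid {^l}b.P \mid {^l}\bar{c}\langle t\rangle.P \mid\ !P \mid {^l}\mathsf{case}\ x\ \mathsf{of}\ \mathsf{some}(y): P_1\ \mathsf{else}\ P_2$; binders $b ::= c?x \mid \&_q(b_1,\dots,b_n)$, with $[\![\forall]\!]$ = conjunction and $[\![\exists]\!]$ = disjunction; terms $t::=c\mid y$; labels are unique. Translation: $T(\mathsf{0},\varphi)=\emptyset$; $T(!P,\varphi)=T(P,\varphi)$; $T(P_1\mid P_2,\varphi)=T(P_1,\varphi)\cup T(P_2,\varphi)$; $T((\nu c)P,\varphi)=T(P,\varphi)$; $T({^l}b.P,\varphi)=T(P,\varphi\wedge \mathsf{hp}(b))\cup\mathsf{th}(\varphi,b)\cup\{\varphi\leadsto\bar{l}\}$; $T({^l}\bar{c}\langle t\rangle.P,\varphi)=T(P,\varphi)\cup\{\varphi\leadsto\bar{c}\}\cup\{\varphi\leadsto\bar{l}\}$; $T({^l}\mathsf{case}\ x\ \mathsf{of}\ \mathsf{some}(y):P_1\ \mathsf{else}\ P_2,\varphi)=T(P_1,\varphi\wedge\bar{x})\cup T(P_2,\varphi\wedge\neg\bar{x})\cup\{\varphi\leadsto\bar{l}\}$;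 with $\mathsf{hp}(c?x)=\bar{c}$, $\mathsf{th}(\varphi,c?x)=\{(\varphi\wedge\bar{c})\leadsto\bar{x}\}$, $\mathsf{hp}(\&_q(b_1,\dots,b_n))=[\![q]\!](\mathsf{hp}(b_1),\dots,\mathsf{hp}(b_n))$, $\mathsf{th}(\varphi,\&_q(b_1,\dots,b_n))=\bigcup_i\mathsf{th}(\varphi,b_i)$. Normalise $T(P,\mathsf{tt})$ by merging constraints with the same consequent $\bar{p}$ via disjunction of antecedents; reading $\leadsto$ as $\Rightarrow$ gives the set $P^l_{\Rightarrow}$. Tree formula: $[\![l]\!] = \mathcal{T}(\varphi,\emptyset)$ where $(\varphi\Rightarrow\bar{l})\in P^l_{\Rightarrow}$, and $\mathcal{T}(\cdot,\mathcal{D})$ (with $\mathcal{D}$ a set of literals) is defined by: $\mathcal{T}(\bar{c},\mathcal{D}) = \bar{c}\vee\mathcal{T}(\varphi,\mathcal{D}\cup\{\bar{c}\})$ if $\bar{c}\notin\mathcal{D}$ where $(\varphi\Rightarrow\bar{c})\in P^l_{\Rightarrow}$, and $=\bar{c}\vee\mathsf{ff}$ otherwise; $\mathcal{T}(\neg\bar{c},\mathcal{D})=\mathcal{T}(\neg\varphi,\mathcal{D}\cup\{\neg\bar{c}\})$ if $\neg\bar{c}\notin\mathcal{D}$ where $(\varphi\Rightarrow\bar{c})\in P^l_{\Rightarrow}$, and $=\mathsf{tt}$ otherwise; $\mathcal{T}(\bar{x},\mathcal{D})=\mathcal{T}(\varphi,\mathcal{D})$ and $\mathcal{T}(\neg\bar{x},\mathcal{D})=\mathcal{T}(\neg\varphi,\mathcal{D})$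 where $(\varphi\Rightarrow\bar{x})\in P^l_{\Rightarrow}$; $\mathcal{T}(\neg(\varphi_1\wedge\dots\wedge\varphi_n),\mathcal{D})=\bigvee_i\mathcal{T}(\neg\varphi_i,\mathcal{D})$; $\mathcal{T}(\neg(\varphi_1\vee\dots\vee\varphi_n),\mathcal{D})=\bigwedge_i\mathcal{T}(\neg\varphi_i,\mathcal{D})$; $\mathcal{T}(\varphi_1\wedge\dots\wedge\varphi_n,\mathcal{D})=\bigwedge_i\mathcal{T}(\varphi_i,\mathcal{D})$; $\mathcal{T}(\varphi_1\vee\dots\vee\varphi_n,\mathcal{D})=\bigvee_i\mathcal{T}(\varphi_i,\mathcal{D})$; $\mathcal{T}(\mathsf{tt},\mathcal{D})=\mathsf{tt}$; $\mathcal{T}(\mathsf{ff},\mathcal{D})=\mathsf{ff}$. *)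

(* Defs.v *)
From Stdlib Require Import List Arith PeanoNat.
Import ListNotations.

Definition name := nat.
Definition var := nat.
Definition label := nat.

Inductive quality := QAll | QEx.

Inductive binder :=
| BIn : name -> var -> binder
| BQ : quality -> list binder -> binder.

Inductive term := TName : name -> term | TVar : var -> term.

Inductive proc :=
| PNil : proc
| PNu : name -> proc -> proc
| PPar : proc -> proc -> proc
| PIn : label -> binder -> proc -> proc
| POut : label -> name -> term -> proc -> proc
| PBang : proc -> proc
| PCase : label -> var -> var -> proc -> proc -> proc.
  (* ^l case x of some(y): P1 else P2 *)

Inductive atom := AChan : name -> atom | AVar : var -> atom | ALab : label -> atom.

Definition atom_eq_dec (a b : atom) : {a = b} + {a <> b}.
Proof. decide equality; apply Nat.eq_dec. Defined.

Inductive Form :=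
| FTT | FFF
| FAtom : atom -> Form
| FNot : Form -> Form
| FAnd : Form -> Form -> Form
| FOr : Form -> Form -> Form.

Fixpoint atoms (f : Form) : list atom :=
  match f with
  | FTT | FFF => []
  | FAtom a => [a]
  | FNot g => atoms g
  | FAnd g h | FOr g h => atoms g ++ atoms h
  end.

Definition qop (q : quality) : Form -> Form -> Form :=
  match q with QAll => FAnd | QEx => FOr end.
Definition qunit (q : quality) : Form :=
  match q with QAll => FTT | QEx => FFF end.

Fixpoint hp (b : binder) : Form :=
  match b with
  | BIn c _ => FAtom (AChan c)
  | BQ q bs =>
      (fix go (l : list binder) : Form :=
         match l with
         | [] => qunit q
         | [b1] => hp b1
         | b1 :: r => qop q (hp b1) (go r)
         end) bs
  end.

(* constraints  phi ~> \bar p  represented as pairs (phi, p) *)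
Definition constr := (Form * atom)%type.

Fixpoint th (phi : Form) (b : binder) : list constr :=
  match b with
  | BIn c x => [(FAnd phi (FAtom (AChan c)), AVar x)]
  | BQ _ bs =>
      (fix go (l : list binder) : list constr :=
         match l with
         | [] => []
         | b1 :: r => th phi b1 ++ go r
         end) bs
  end.

Fixpoint Tr (P : proc) (phi : Form) : list constr :=
  match P with
  | PNil => []
  | PBang Q => Tr Q phi
  | PPar P1 P2 => Tr P1 phi ++ Tr P2 phi
  | PNu _ Q => Tr Q phi
  | PIn l b Q => Tr Q (FAnd phi (hp b)) ++ th phi b ++ [(phi, ALab l)]
  | POut l c _ Q => Tr Q phi ++ [(phi, AChan c); (phi, ALab l)]
  | PCase l x _ P1 P2 =>
      Tr P1 (FAnd phi (FAtom (AVar x)))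
      ++ Tr P2 (FAnd phi (FNot (FAtom (AVar x))))
      ++ [(phi, ALab l)]
  end.

(* Normalisation: the antecedent of \bar p in P_=> is the disjunction of all
   antecedents with consequent \bar p (the empty disjunction being ff). *)
Fixpoint disj (l : list Form) : Form :=
  match l with
  | [] => FFF
  | [f] => f
  | f :: r => FOr f (disj r)
  end.

Definition ante (C : list constr) (p : atom) : Form :=
  disj (map fst (filter (fun fa => if atom_eq_dec (snd fa) p then true else false) C)).

(* signed channel literals in the set D: (true,c) = \bar c, (false,c) = ~\bar c *)
Definition lits := list (bool * name).

(* Tree C D phi psi  :<->  T(phi, D) = psi  w.r.t. the normalised constraints C *)
Inductive Tree (C : list constr) : lits -> Form -> Form -> Prop :=
| Tr_chan_new : forall D c psi, ~ In (true, c) D ->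
    Tree C ((true, c) :: D) (ante C (AChan c)) psi ->
    Tree C D (FAtom (AChan c)) (FOr (FAtom (AChan c)) psi)
| Tr_chan_old : forall D c, In (true, c) D ->
    Tree C D (FAtom (AChan c)) (FOr (FAtom (AChan c)) FFF)
| Tr_nchan_new : forall D c psi, ~ In (false, c) D ->
    Tree C ((false, c) :: D) (FNot (ante C (AChan c))) psi ->
    Tree C D (FNot (FAtom (AChan c))) psi
| Tr_nchan_old : forall D c, In (false, c) D ->
    Tree C D (FNot (FAtom (AChan c))) FTT
| Tr_var : forall D x psi, Tree C D (ante C (AVar x)) psi ->
    Tree C D (FAtom (AVar x)) psi
| Tr_nvar : forall D x psi, Tree C D (FNot (ante C (AVar x))) psi ->
    Tree C D (FNot (FAtom (AVar x))) psi
| Tr_nand : forall D f g psif psig,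
    Tree C D (FNot f) psif -> Tree C D (FNot g) psig ->
    Tree C D (FNot (FAnd f g)) (FOr psif psig)
| Tr_nor : forall D f g psif psig,
    Tree C D (FNot f) psif -> Tree C D (FNot g) psig ->
    Tree C D (FNot (FOr f g)) (FAnd psif psig)
| Tr_and : forall D f g psif psig,
    Tree C D f psif -> Tree C D g psig -> Tree C D (FAnd f g) (FAnd psif psig)
| Tr_or : forall D f g psif psig,
    Tree C D f psif -> Tree C D g psig -> Tree C D (FOr f g) (FOr psif psig)
| Tr_tt : forall D, Tree C D FTT FTT
| Tr_ff : forall D, Tree C D FFF FFF
| Tr_ntt : forall D, Tree C D (FNot FTT) FFF
| Tr_nff : forall D, Tree C D (FNot FFF) FTT
| Tr_nnot : forall D f psi, Tree C D f psi -> Tree C D (FNot (FNot f)) psi.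

Definition tree_formula (P : proc) (l : label) (psi : Form) : Prop :=
  Tree (Tr P FTT) [] (ante (Tr P FTT) (ALab l)) psi.

Fixpoint bvars (b : binder) : list var :=
  match b with
  | BIn _ x => [x]
  | BQ _ bs => (fix go (l : list binder) : list var :=
                  match l with [] => [] | b1 :: r => bvars b1 ++ go r end) bs
  end.

Fixpoint input_vars (P : proc) : list var :=
  match P with
  | PNil => []
  | PNu _ Q | PBang Q | POut _ _ _ Q => input_vars Q
  | PPar P1 P2 => input_vars P1 ++ input_vars P2
  | PIn _ b Q => bvars b ++ input_vars Q
  | PCase _ _ _ P1 P2 => input_vars P1 ++ input_vars P2
  end.

Fixpoint bound_vars (P : proc) : list var :=
  match P with
  | PNil => []
  | PNu _ Q | PBang Q | POut _ _ _ Q => bound_vars Q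
  | PPar P1 P2 => bound_vars P1 ++ bound_vars P2
  | PIn _ b Q => bvars b ++ bound_vars Q
  | PCase _ _ y P1 P2 => y :: bound_vars P1 ++ bound_vars P2
  end.

Fixpoint bound_names (P : proc) : list name :=
  match P with
  | PNil => []
  | PNu c Q => c :: bound_names Q
  | PBang Q | POut _ _ _ Q | PIn _ _ Q => bound_names Q
  | PPar P1 P2 => bound_names P1 ++ bound_names P2
  | PCase _ _ _ P1 P2 => bound_names P1 ++ bound_names P2
  end.

Fixpoint labels (P : proc) : list label :=
  match P with
  | PNil => []
  | PNu _ Q | PBang Q => labels Q
  | PPar P1 P2 => labels P1 ++ labels P2
  | PIn l _ Q | POut l _ _ Q => l :: labels Q
  | PCase l _ _ P1 P2 => l :: labels P1 ++ labels P2
  end.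

Fixpoint closed_in (bv : list var) (P : proc) : Prop :=
  match P with
  | PNil => True
  | PNu _ Q | PBang Q => closed_in bv Q
  | PPar P1 P2 => closed_in bv P1 /\ closed_in bv P2
  | PIn _ b Q => closed_in (bvars b ++ bv) Q
  | POut _ _ t Q =>
      (match t with TVar y => In y bv | TName _ => True end) /\ closed_in bv Q
  | PCase _ x y P1 P2 => In x bv /\ closed_in (y :: bv) P1 /\ closed_in bv P2
  end.

Definition closed (P : proc) : Prop := closed_in [] P.

(* Main.v *)
Require Import Defs.
From Stdlib Require Import List Arith Lia PeanoNat Wf_nat.
Import ListNotations.

Fixpoint binder_ind' (Pb : binder -> Prop) (H1 : forall c x, Pb (BIn c x))
  (H2 : forall q bs, Forall Pb bs -> Pb (BQ q bs)) (b : binder) : Pb b :=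
  match b with
  | BIn c x => H1 c x
  | BQ q bs => H2 q bs ((fix go (l : list binder) : Forall Pb l :=
                 match l with
                 | [] => Forall_nil _
                 | b1 :: r => Forall_cons _ (binder_ind' Pb H1 H2 b1) (go r)
                 end) bs)
  end.

Fixpoint hps q (l : list binder) : Form :=
  match l with
  | [] => qunit q
  | [b1] => hp b1
  | b1 :: r => qop q (hp b1) (hps q r)
  end.
Fixpoint ths phi (l : list binder) : list constr :=
  match l with [] => [] | b1 :: r => th phi b1 ++ ths phi r end.
Fixpoint bvarss (l : list binder) : list var :=
  match l with [] => [] | b1 :: r => bvars b1 ++ bvarss r end.

Lemma hp_cons2 q b1 b2 r : hp (BQ q (b1 :: b2 :: r)) = qop q (hp b1) (hp (BQ q (b2 :: r))). Proof. reflexivity. Qed.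
Lemma th_cons phi q b1 r : th phi (BQ q (b1 :: r)) = th phi b1 ++ th phi (BQ q r). Proof. reflexivity. Qed.
Lemma bvars_cons q b1 r : bvars (BQ q (b1 :: r)) = bvars b1 ++ bvars (BQ q r). Proof. reflexivity. Qed.

Lemma hp_atoms : forall b a, In a (atoms (hp b)) -> exists c, a = AChan c.
Proof.
  apply (binder_ind' (fun b => forall a, In a (atoms (hp b)) -> exists c, a = AChan c)).
  - intros c x a H. simpl in H. destruct H as [H|[]]. eauto.
  - intros q bs HF. induction HF as [|b1 r Hb1 HF IH]; intros a H.
    + destruct q; simpl in H; contradiction.
    + destruct r as [|b2 r'].
      * simpl in H. auto.
      * rewrite hp_cons2 in H.
        destruct q; simpl in H; apply in_app_iff in H; destruct H; auto.
Qed.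

Lemma th_shape : forall b phi psi p, In (psi, p) (th phi b) ->
  exists c x, psi = FAnd phi (FAtom (AChan c)) /\ p = AVar x /\ In x (bvars b).
Proof.
  apply (binder_ind' (fun b => forall phi psi p, In (psi, p) (th phi b) ->
  exists c x, psi = FAnd phi (FAtom (AChan c)) /\ p = AVar x /\ In x (bvars b))).
  - intros c x phi psi p H. simpl in H. destruct H as [H|[]]. inversion H; subst.
    exists c, x. simpl. auto.
  - intros q bs HF phi psi p.
    induction HF as [|b1 r Hb1 HF IH]; intros H.
    + simpl in H; contradiction.
    + rewrite th_cons in H. apply in_app_iff in H. destruct H as [H|H].
      * destruct (Hb1 _ _ _ H) as (c & x & E1 & E2 & E3). exists c, x.
        rewrite bvars_cons, in_app_iff. auto.
      * destruct (IH H) as (c & x & E1 & E2 & E3). exists c, x.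
        rewrite bvars_cons, in_app_iff. auto.
Qed.

Lemma Tr_dep : forall Q phi bv,
  (forall z, In (AVar z) (atoms phi) -> In z bv) -> closed_in bv Q ->
  forall psi x, In (psi, AVar x) (Tr Q phi) ->
  exists l1 l2, bound_vars Q = l1 ++ x :: l2 /\
    forall z, In (AVar z) (atoms psi) -> In z (bv ++ l1).
Proof.
  induction Q; intros phi bv Hphi Hcl psi x0 H; simpl in *.
  - contradiction.
  - eauto.
  - destruct Hcl as [H1 H2]. apply in_app_iff in H. destruct H as [H|H].
    + destruct (IHQ1 _ _ Hphi H1 _ _ H) as (l1 & l2 & E & Hz).
      exists l1, (l2 ++ bound_vars Q2). rewrite E, <- app_assoc. split; auto.
    + destruct (IHQ2 _ _ Hphi H2 _ _ H) as (l1 & l2 & E & Hz).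
      exists (bound_vars Q1 ++ l1), l2. rewrite E, app_assoc. split; auto.
      intros z Hz'. specialize (Hz z Hz'). rewrite !in_app_iff in *. tauto.
  - apply in_app_iff in H. destruct H as [H|H].
    + assert (Hphi' : forall z, In (AVar z) (atoms (FAnd phi (hp b))) -> In z (bvars b ++ bv)).
      { intros z Hz. simpl in Hz. apply in_app_iff in Hz. destruct Hz as [Hz|Hz].
        - apply in_app_iff; right; auto.
        - destruct (hp_atoms _ _ Hz) as [c E]; discriminate. }
      destruct (IHQ _ _ Hphi' Hcl _ _ H) as (l1 & l2 & E & Hz).
      exists (bvars b ++ l1), l2. rewrite E, app_assoc. split; auto.
      intros z Hz'. specialize (Hz z Hz'). rewrite !in_app_iff in *. tauto.
    + apply in_app_iff in H. destruct H as [H|H].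
      * destruct (th_shape _ _ _ _ H) as (c & x & E1 & E2 & E3). inversion E2; subst.
        destruct (in_split _ _ E3) as (l1 & l2 & E).
        exists l1, (l2 ++ bound_vars Q). rewrite E, <- app_assoc. split; auto.
        intros z Hz. simpl in Hz. apply in_app_iff in Hz. destruct Hz as [Hz|[Hz|[]]].
        -- apply in_app_iff; left; auto.
        -- discriminate.
      * destruct H as [H|[]]. discriminate.
  - destruct Hcl as [_ Hcl]. apply in_app_iff in H. destruct H as [H|H].
    + eauto.
    + destruct H as [H|[H|[]]]; discriminate.
  - eauto.
  - destruct Hcl as (Hx & H1 & H2). apply in_app_iff in H. destruct H as [H|H].
    + assert (Hphi' : forall z, In (AVar z) (atoms (FAnd phi (FAtom (AVar v)))) -> In z (v0 :: bv)).
      { intros z Hz. simpl in Hz. apply in_app_iff in Hz. destruct Hz as [Hz|[Hz|[]]].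
        - right; auto.
        - inversion Hz; subst; right; auto. }
      destruct (IHQ1 _ _ Hphi' H1 _ _ H) as (l1 & l2 & E & Hz).
      exists (v0 :: l1), (l2 ++ bound_vars Q2). rewrite E. simpl. rewrite <- app_assoc.
      split; auto.
      intros z Hz'. specialize (Hz z Hz'). simpl in Hz. rewrite !in_app_iff in *. simpl in *. tauto.
    + apply in_app_iff in H. destruct H as [H|H].
      * assert (Hphi' : forall z, In (AVar z) (atoms (FAnd phi (FNot (FAtom (AVar v))))) -> In z bv).
        { intros z Hz. simpl in Hz. apply in_app_iff in Hz. destruct Hz as [Hz|[Hz|[]]].
          - auto.
          - inversion Hz; subst; auto. }
        destruct (IHQ2 _ _ Hphi' H2 _ _ H) as (l1 & l2 & E & Hz).
        exists (v0 :: bound_vars Q1 ++ l1), l2. rewrite E. simpl. rewrite app_assoc.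
        split; auto.
        intros z Hz'. specialize (Hz z Hz'). rewrite !in_app_iff in *. simpl. rewrite !in_app_iff. tauto.
      * destruct H as [H|[]]. discriminate.
Qed.

Lemma Tr_nolab : forall Q phi,
  (forall l, ~ In (ALab l) (atoms phi)) ->
  forall psi p, In (psi, p) (Tr Q phi) -> forall l, ~ In (ALab l) (atoms psi).
Proof.
  induction Q; intros phi Hphi psi p H; simpl in *.
  - contradiction.
  - eauto.
  - apply in_app_iff in H; destruct H; eauto.
  - apply in_app_iff in H. destruct H as [H|H].
    + apply (IHQ (FAnd phi (hp b))) with (p := p); auto.
      intros l0 Hl. simpl in Hl. apply in_app_iff in Hl. destruct Hl as [Hl|Hl].
      * eapply Hphi; eauto.
      * destruct (hp_atoms _ _ Hl); discriminate.
    + apply in_app_iff in H. destruct H as [H|H].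
      * destruct (th_shape _ _ _ _ H) as (c & x & E1 & E2 & E3). subst.
        intros l0 Hl. simpl in Hl. apply in_app_iff in Hl. destruct Hl as [Hl|[Hl|[]]].
        -- eapply Hphi; eauto.
        -- discriminate.
      * destruct H as [H|[]]. inversion H; subst; auto.
  - apply in_app_iff in H. destruct H as [H|H]; eauto.
    destruct H as [H|[H|[]]]; inversion H; subst; auto.
  - eauto.
  - apply in_app_iff in H. destruct H as [H|H].
    + apply (IHQ1 (FAnd phi (FAtom (AVar v)))) with (p := p); auto.
      intros l0 Hl. simpl in Hl. apply in_app_iff in Hl. destruct Hl as [Hl|[Hl|[]]].
      * eapply Hphi; eauto.
      * discriminate.
    + apply in_app_iff in H. destruct H as [H|H].
      * apply (IHQ2 (FAnd phi (FNot (FAtom (AVar v))))) with (p := p); auto.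
        intros l0 Hl. simpl in Hl. apply in_app_iff in Hl. destruct Hl as [Hl|[Hl|[]]].
        -- eapply Hphi; eauto.
        -- discriminate.
      * destruct H as [H|[]]. inversion H; subst; auto.
Qed.

Fixpoint idx (l : list nat) (z : nat) : nat :=
  match l with [] => 0 | a :: r => if Nat.eqb a z then 0 else S (idx r z) end.

Lemma idx_notin : forall l1 x l2, ~ In x l1 -> idx (l1 ++ x :: l2) x = length l1.
Proof.
  induction l1; intros x l2 H; simpl.
  - rewrite Nat.eqb_refl; auto.
  - destruct (Nat.eqb_spec a x). { subst. exfalso; apply H; left; auto. }
    rewrite IHl1; auto. intro; apply H; right; auto.
Qed.

Lemma idx_in : forall l1 z l2, In z l1 -> idx (l1 ++ l2) z < length l1.
Proof.
  induction l1; intros z l2 H; simpl in *.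
  - contradiction.
  - destruct (Nat.eqb_spec a z). lia. destruct H. congruence.
    specialize (IHl1 z l2 H). lia.
Qed.

Lemma idx_lt : forall l1 x l2 z, NoDup (l1 ++ x :: l2) -> In z l1 ->
  idx (l1 ++ x :: l2) z < idx (l1 ++ x :: l2) x.
Proof.
  intros l1 x l2 z Hnd Hz. rewrite idx_notin.
  - apply idx_in; auto.
  - intro Hx. apply NoDup_remove_2 in Hnd. apply Hnd. apply in_app_iff; auto.
Qed.

Lemma disj_atoms : forall l a, In a (atoms (disj l)) -> exists f, In f l /\ In a (atoms f).
Proof.
  induction l; intros x H; simpl in *.
  - contradiction.
  - destruct l as [|b l'].
    + eauto.
    + simpl in H. apply in_app_iff in H. destruct H as [H|H]; eauto.
      destruct (IHl x H) as (f & Hf & Ha). eauto.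
Qed.

Lemma ante_atoms : forall C p a, In a (atoms (ante C p)) ->
  exists phi, In (phi, p) C /\ In a (atoms phi).
Proof.
  intros C p a H. unfold ante in H. apply disj_atoms in H.
  destruct H as (f & Hf & Ha). apply in_map_iff in Hf. destruct Hf as ([phi q] & E & Hin).
  apply filter_In in Hin. destruct Hin as [Hin Hq]. simpl in *.
  destruct (atom_eq_dec q p); [|discriminate]. subst. eauto.
Qed.

Fixpoint mr (r : var -> nat) (f : Form) : nat :=
  match f with
  | FTT | FFF => 0
  | FAtom (AVar z) => S (r z)
  | FAtom _ => 0
  | FNot g => mr r g
  | FAnd g h | FOr g h => Nat.max (mr r g) (mr r h)
  end.

Fixpoint fsize (f : Form) : nat :=
  match f with
  | FTT | FFF | FAtom _ => 1
  | FNot g => S (fsize g)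
  | FAnd g h | FOr g h => S (fsize g + fsize h)
  end.

Lemma mr_bound : forall r k f, (forall z, In (AVar z) (atoms f) -> r z < k) -> mr r f <= k.
Proof.
  induction f; intros H; simpl in *; try lia.
  - destruct a; try lia. specialize (H v (or_introl eq_refl)). lia.
  - auto.
  - assert (mr r f1 <= k) by (apply IHf1; intros; apply H; apply in_app_iff; auto).
    assert (mr r f2 <= k) by (apply IHf2; intros; apply H; apply in_app_iff; auto). lia.
  - assert (mr r f1 <= k) by (apply IHf1; intros; apply H; apply in_app_iff; auto).
    assert (mr r f2 <= k) by (apply IHf2; intros; apply H; apply in_app_iff; auto). lia.
Qed.

Definition lit_eq_dec (a b : bool * name) : {a = b} + {a <> b}.
Proof. decide equality; [apply Nat.eq_dec | apply Bool.bool_dec]. Defined.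

Fixpoint cnt (L : list (bool * name)) (D : lits) : nat :=
  match L with
  | [] => 0
  | b :: L' => (if in_dec lit_eq_dec b D then 0 else 1) + cnt L' D
  end.

Lemma cnt_le : forall L a D, cnt L (a :: D) <= cnt L D.
Proof.
  induction L; intros x D; cbn [cnt]. lia.
  specialize (IHL x D).
  destruct (in_dec lit_eq_dec a (x :: D)) as [H|H];
  destruct (in_dec lit_eq_dec a D) as [H'|H']; try lia.
  exfalso; apply H; right; auto.
Qed.

Lemma cnt_lt : forall L a D, In a L -> ~ In a D -> cnt L (a :: D) < cnt L D.
Proof.
  induction L; intros x D Hin Hn; cbn [cnt In] in *. contradiction.
  destruct Hin as [E|Hin].
  - subst. pose proof (cnt_le L x D).
    destruct (in_dec lit_eq_dec x (x :: D)) as [H0|H0]; [|exfalso; apply H0; left; auto].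
    destruct (in_dec lit_eq_dec x D); [contradiction|]. lia.
  - specialize (IHL x D Hin Hn).
    destruct (in_dec lit_eq_dec a (x :: D)) as [H|H];
    destruct (in_dec lit_eq_dec a D) as [H'|H']; try lia.
    exfalso; apply H; right; auto.
Qed.

Section Exist.
Variable C : list constr.
Variable r : var -> nat.
Hypothesis Hrank : forall phi x, In (phi, AVar x) C ->
  forall z, In (AVar z) (atoms phi) -> r z < r x.
Definition AC := flat_map (fun ca => atoms (fst ca)) C.
Hypothesis Hnolab : forall l, ~ In (ALab l) AC.
Definition chlits (a : atom) : list (bool * name) :=
  match a with AChan c => [(true, c); (false, c)] | _ => [] end.
Definition LL := flat_map chlits AC.

Definition inclf f := forall a, In a (atoms f) -> In a AC.

Lemma ante_incl : forall p, inclf (ante C p).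
Proof.
  intros p a H. destruct (ante_atoms _ _ _ H) as (phi & Hin & Ha).
  unfold AC. apply in_flat_map. exists (phi, p). auto.
Qed.

Lemma ante_var_mr : forall x, mr r (ante C (AVar x)) <= r x.
Proof.
  intros x. apply mr_bound. intros z Hz.
  destruct (ante_atoms _ _ _ Hz) as (phi & Hin & Ha). eauto.
Qed.

Lemma ex_tree : forall n D k s f, cnt LL D = n -> mr r f <= k -> fsize f <= s ->
  inclf f -> exists psi, Tree C D f psi.
Proof.
  intros n. induction n as [n IHn] using lt_wf_ind.
  intros D k. induction k as [k IHk] using lt_wf_ind.
  intros s. induction s as [s IHs] using lt_wf_ind.
  intros f Hn Hk Hs Hi.
  assert (Hchan : forall c b, In (AChan c) (atoms f) -> In (b, c) LL).
  { intros c b Hc. unfold LL. apply in_flat_map. exists (AChan c). split; auto.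
    destruct b; simpl; auto. }
  destruct f as [| |a|g|g h|g h].
  - eexists; constructor.
  - eexists; constructor.
  - destruct a as [c|x|l].
    + destruct (in_dec lit_eq_dec (true, c) D) as [Hd|Hd].
      * eexists; apply Tr_chan_old; auto.
      * destruct (IHn (cnt LL ((true, c) :: D))) with (D := (true, c) :: D)
          (k := mr r (ante C (AChan c))) (s := fsize (ante C (AChan c)))
          (f := ante C (AChan c)) as [psi Hpsi]; auto.
        -- subst. apply cnt_lt; auto. apply Hchan. simpl; auto.
        -- apply ante_incl.
        -- eexists; apply Tr_chan_new; eauto.
    + simpl in Hk. destruct (IHk (r x)) with (s := fsize (ante C (AVar x)))
          (f := ante C (AVar x)) as [psi Hpsi];
        [lia | auto | apply ante_var_mr | auto | apply ante_incl | ].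
      eexists; apply Tr_var; eauto.
    + exfalso. apply (Hnolab l). apply Hi. simpl; auto.
  - destruct g as [| |a|g|g h|g h].
    + eexists; constructor.
    + eexists; constructor.
    + destruct a as [c|x|l].
      * destruct (in_dec lit_eq_dec (false, c) D) as [Hd|Hd].
        -- eexists; apply Tr_nchan_old; auto.
        -- destruct (IHn (cnt LL ((false, c) :: D))) with (D := (false, c) :: D)
             (k := mr r (FNot (ante C (AChan c)))) (s := fsize (FNot (ante C (AChan c))))
             (f := FNot (ante C (AChan c))) as [psi Hpsi]; auto.
           ++ subst. apply cnt_lt; auto. apply Hchan. simpl; auto.
           ++ apply ante_incl.
           ++ eexists; apply Tr_nchan_new; eauto.
      * simpl in Hk. destruct (IHk (r x)) with (s := fsize (FNot (ante C (AVar x))))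
          (f := FNot (ante C (AVar x))) as [psi Hpsi];
          [lia | auto | apply ante_var_mr | auto | apply ante_incl | ].
        eexists; apply Tr_nvar; eauto.
      * exfalso. apply (Hnolab l). apply Hi. simpl; auto.
    + destruct (IHs (fsize g)) with (f := g) as [psi Hpsi]; auto.
      * simpl in Hs; lia.
      * eexists; apply Tr_nnot; eauto.
    + simpl in Hk, Hs.
      destruct (IHs (fsize (FNot g))) with (f := FNot g) as [p1 H1]; auto.
      { simpl; lia. } { simpl; lia. }
      { intros a Ha; apply Hi; simpl; apply in_app_iff; auto. }
      destruct (IHs (fsize (FNot h))) with (f := FNot h) as [p2 H2]; auto.
      { simpl; lia. } { simpl; lia. }
      { intros a Ha; apply Hi; simpl; apply in_app_iff; auto. }
      eexists; apply Tr_nand; eauto.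
    + simpl in Hk, Hs.
      destruct (IHs (fsize (FNot g))) with (f := FNot g) as [p1 H1]; auto.
      { simpl; lia. } { simpl; lia. }
      { intros a Ha; apply Hi; simpl; apply in_app_iff; auto. }
      destruct (IHs (fsize (FNot h))) with (f := FNot h) as [p2 H2]; auto.
      { simpl; lia. } { simpl; lia. }
      { intros a Ha; apply Hi; simpl; apply in_app_iff; auto. }
      eexists; apply Tr_nor; eauto.
  - simpl in Hk, Hs.
    destruct (IHs (fsize g)) with (f := g) as [p1 H1]; auto; try lia.
    { intros a Ha; apply Hi; simpl; apply in_app_iff; auto. }
    destruct (IHs (fsize h)) with (f := h) as [p2 H2]; auto; try lia.
    { intros a Ha; apply Hi; simpl; apply in_app_iff; auto. }
    eexists; apply Tr_and; eauto.
  - simpl in Hk, Hs.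
    destruct (IHs (fsize g)) with (f := g) as [p1 H1]; auto; try lia.
    { intros a Ha; apply Hi; simpl; apply in_app_iff; auto. }
    destruct (IHs (fsize h)) with (f := h) as [p2 H2]; auto; try lia.
    { intros a Ha; apply Hi; simpl; apply in_app_iff; auto. }
    eexists; apply Tr_or; eauto.
Qed.
End Exist.

Lemma tree_chan : forall C D f psi, Tree C D f psi ->
  forall a, In a (atoms psi) -> exists c, a = AChan c.
Proof.
  induction 1; intros a Ha; simpl in *;
    repeat match goal with H : In _ (_ ++ _) |- _ => apply in_app_iff in H end;
    intuition eauto.
Qed.

Theorem lemmaB3 (P : proc) :
  closed P ->
  NoDup (bound_vars P) ->
  NoDup (bound_names P) ->
  NoDup (labels P) ->
  forall l, In l (labels P) ->
    (exists psi, tree_formula P l psi) /\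
    (forall psi, tree_formula P l psi ->
       (forall x, In x (input_vars P) -> ~ In (AVar x) (atoms psi)) /\
       (forall a, In a (atoms psi) -> exists c, a = AChan c)).
Proof.
  intros Hcl Hbv _ _ l _. split.
  - unfold tree_formula.
    set (C := Tr P FTT).
    assert (Hrank : forall phi x, In (phi, AVar x) C ->
      forall z, In (AVar z) (atoms phi) -> idx (bound_vars P) z < idx (bound_vars P) x).
    { intros phi x Hin z Hz.
      destruct (Tr_dep P FTT [] (fun z H => H) Hcl phi x Hin) as (l1 & l2 & E & Hd).
      specialize (Hd z Hz). simpl in Hd. rewrite E in *. apply idx_lt; auto. }
    assert (Hnl : forall l0, ~ In (ALab l0) (AC C)).
    { intros l0 H. unfold AC in H. apply in_flat_map in H. destruct H as ([phi p] & Hin & Ha).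
      eapply (Tr_nolab P FTT); eauto. }
    eapply (ex_tree C _ Hrank Hnl); eauto. apply ante_incl.
  - intros psi Hpsi.
    assert (HC := tree_chan _ _ _ _ Hpsi). split; auto.
    intros x _ Hx. destruct (HC _ Hx). discriminate.
Qed.
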